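(* Let $k$ be a positive integer, $a=6k+1$, $b=a+2$, $c=a+4$, $S=\{a,b,c\}$, $G=\langle S\rangle$, $t=\lfloor 3k/2\rfloor$, and $\epsilon=0$ if $k$ is even, $\epsilon=1$ if $k$ is odd. Define $A_{i,k}=[ia,\,ia+4i]_2$ for $i\in[1,t]$, and for $i\in[t+1,2t+\epsilon]$ $B_{i,k}=[ia,\,ia+2(2(i-t-1)-\epsilon)]$, $C_{i,k}=[ia+2(2(i-t-1)-\epsilon+1),\,ia+2(2t+\epsilon)]_2$. Let $H_{4,k}=\{0\}\cup\bigcup_{i=1}^{t}A_{i,k}\cup\bigcup_{i=t+1}^{2t+\epsilon}(B_{i,k}\cup C_{i,k})\cup[(2t+\epsilon+1)a,\infty[$. Then: (1) $H_{4,k}$ is a submonoid of $(\mathbb{N},+,0)$ containing $S$; (2) $A_{i,k}<A_{i+1,k}$ for $i\in[1,t-1]$; if $k$ is even then $A_{t,k}<B_{t+1,k}$ and $B_{t+1,k}<C_{t+1,k}$, while if $k$ is odd then $B_{t+1,k}=\emptyset$ and $A_{t,k}<C_{t+1,k}$; $B_{i,k}<C_{i,k}$ for $i\in[t+2,2t+\epsilon]$; $C_{i,k}<B_{i+1,k}$ for $i\in[t+1,2t+\epsilon-1]$; and $C_{2t+\epsilon,k}<[(2t+\epsilon+1)a,\infty[$; (3) $G=H_{4,k}$; (4) $H_{4,k}$ is a $3$-permutation numerical semigroup.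
   Context: $\mathbb{N}=\{0,1,2,\dots\}$. A numerical semigroup is a submonoid $G$ of $(\mathbb{N},+,0)$ with $\mathbb{N}\setminus G$ finite; $\langle S\rangle$ is the submonoid generated by $S$. Writing the elements of a numerical semigroup as $0=g_0<g_1<g_2<\cdots$, it is an $n$-permutation numerical semigroup if it is generated by $\{g_1,\dots,g_n\}$ and for every $k\in\mathbb{N}$ the tuple $(g_{kn+1}\bmod n,\dots,g_{kn+n}\bmod n)$ contains exactly one representative of each residue class mod $n$. Notation: $[u,v]=\{x\in\mathbb{N}:u\le x\le v\}$ and $[u,v]_2=\{x\in[u,v]:x\equiv u\pmod 2\}$ (both empty if $u>v$); $[u,\infty[=\{x\in\mathbb{N}:x\ge u\}$. For nonempty $X,Y\subseteq\mathbb{N}$, $X<Y$ means $x<y$ for all $x\in X,y\in Y$. *)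

(* Defs.v *)
From mathcomp Require Import all_boot all_order all_algebra.
Set Implicit Arguments. Unset Strict Implicit. Unset Printing Implicit Defensive.
Import Order.TTheory GRing.Theory Num.Theory.

Definition natset := nat -> Prop.

(* [u,v] = {x in N : u <= x <= v}; bounds are integers (they may be negative,
   in which case the lower bound is vacuous / the set may be empty). *)
Definition iv (u v : int) : natset := fun x => (u <= x%:Z <= v)%R.
Definition iv2 (u v : int) : natset :=
  fun x => (u <= x%:Z <= v)%R /\ (x%:Z - u)%R \in dvdz 2.
Definition from (u : nat) : natset := fun x => u <= x.

Definition set_lt (X Y : natset) : Prop :=
  (exists x, X x) /\ (exists y, Y y) /\ (forall x y, X x -> Y y -> x < y).

Definition is_submonoid (X : natset) : Prop :=
  X 0 /\ (forall x y, X x -> X y -> X (x + y)).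

Inductive gen (S : natset) : natset :=
  | gen0 : gen S 0
  | genS s x : S s -> gen S x -> gen S (s + x).

Definition numerical_semigroup (X : natset) : Prop :=
  is_submonoid X /\ exists N, forall x, N <= x -> X x.

Definition is_enum (X : natset) (g : nat -> nat) : Prop :=
  (forall j, g j < g j.+1) /\ (forall x, X x <-> exists j, g j = x).

Definition perm_ns (n : nat) (X : natset) : Prop :=
  numerical_semigroup X /\
  exists g, is_enum X g /\
    (forall x, X x <-> gen (fun s => exists2 j, 1 <= j <= n & s = g j) x) /\
    (forall m r, r < n ->
       count (fun j => g (m * n + j) %% n == r) (iota 1 n) = 1).

Definition a4 (k : nat) : nat := 6 * k + 1.
Definition S4 (k : nat) : natset :=
  fun s => s = a4 k \/ s = a4 k + 2 \/ s = a4 k + 4.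
Definition t4 (k : nat) : nat := (3 * k) %/ 2.
Definition eps4 (k : nat) : nat := odd k.

Definition A4 (k i : nat) : natset :=
  iv2 (i * a4 k)%:Z (i * a4 k + 4 * i)%:Z.
Definition B4 (k i : nat) : natset :=
  iv (i * a4 k)%:Z
     ((i * a4 k)%:Z + 2 * (2 * (i%:Z - (t4 k)%:Z - 1) - (eps4 k)%:Z))%R.
Definition C4 (k i : nat) : natset :=
  iv2 ((i * a4 k)%:Z + 2 * (2 * (i%:Z - (t4 k)%:Z - 1) - (eps4 k)%:Z + 1))%R
      ((i * a4 k)%:Z + 2 * (2 * t4 k + eps4 k)%:Z)%R.

Definition H4 (k : nat) : natset := fun x =>
  x = 0
  \/ (exists i, 1 <= i <= t4 k /\ A4 k i x)
  \/ (exists i, t4 k + 1 <= i <= 2 * t4 k + eps4 k /\ (B4 k i x \/ C4 k i x))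
  \/ from ((2 * t4 k + eps4 k + 1) * a4 k) x.

(* Main.v *)
Require Import Defs.
From mathcomp Require Import all_boot all_order all_algebra zify.
Import Order.TTheory GRing.Theory Num.Theory.

Definition HY (a t e s : nat) : Prop :=
  t = 3*s+e /\ a = 4*t+2*e+1 /\ (e = 0 \/ e = 1) /\ 1 <= t.

Definition Mem (a i y : nat) : Prop :=
  (y %% 2 = 0 /\ y <= 4*i) \/ (y %% 2 = 1 /\ a + y + 4 <= 4*i).
Definition hb a x := Mem a (x %/ a) (x %% a).

Lemma divmodE a i y : y < a -> (i*a+y) %/ a = i /\ (i*a+y) %% a = y.
Proof.
move=> h; have a0 : 0 < a by lia.
by rewrite divnMDl // modnMDl divn_small // modn_small // addn0.
Qed.

Lemma decomp a x : 0 < a -> exists i y, y < a /\ x = i*a + y.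
Proof. move=> a0; exists (x %/ a), (x %% a); split; [exact: ltn_pmod | exact: divn_eq]. Qed.

Lemma hbE a i y : y < a -> hb a (i*a+y) <-> Mem a i y.
Proof. by move=> h; rewrite /hb; case: (divmodE _ i _ h) => -> ->. Qed.

Definition nx a t e i y x :=
  if i <= t then (if y + 2 <= 4*i then x+2 else (i+1)*a)
  else if i <= 2*t+e then
    (if y + 2*e + 1 <= 4*(i-t-1) then x+1 else if y+2 < a then x+2 else x+1)
  else x+1.
Definition nxt a t e x := nx a t e (x %/ a) (x %% a) x.

Lemma nxtE a t e i y : y < a -> nxt a t e (i*a+y) = nx a t e i y (i*a+y).
Proof. by move=> h; rewrite /nxt; case: (divmodE _ i _ h) => -> ->. Qed.

Definition RB t e m := (t+1)*(t+1) + (2*t+e)* m + (m* m - e* m) + e.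
Definition RC t e m := (t+1)*(t+1) + (2*t+e)* m + m* m + (2-e)* m.
Definition rk a t e i y x :=
  if i <= t then i*i + y %/ 2
  else if i <= 2*t+e then
    (if y + 2*e <= 4*(i-t-1) then RB t e (i-t-1) + y else RC t e (i-t-1) + y %/ 2)
  else RB t e (t+e) + (x - (2*t+e+1)*a).
Definition rank a t e x := rk a t e (x %/ a) (x %% a) x.

Lemma rankE a t e i y : y < a -> rank a t e (i*a+y) = rk a t e i y (i*a+y).
Proof. by move=> h; rewrite /rank; case: (divmodE _ i _ h) => -> ->. Qed.

Ltac ifs := repeat (case: ifP => ?).

Lemma nxtA1 a t e i y : y < a -> i <= t -> y + 2 <= 4*i -> nxt a t e (i*a+y) = i*a+(y+2).
Proof. move=> h h1 h2; rewrite nxtE // /nx; ifs; lia. Qed.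
Lemma nxtA2 a t e i y : y < a -> i <= t -> 4*i < y + 2 -> nxt a t e (i*a+y) = (i+1)*a+0.
Proof. move=> h h1 h2; rewrite nxtE // /nx; ifs; lia. Qed.
Lemma nxtB1 a t e m y : y < a -> m + 1 <= t + e -> y + 2*e + 1 <= 4* m ->
  nxt a t e ((t+1+m)*a+y) = (t+1+m)*a+(y+1).
Proof. move=> h h1 h2; rewrite nxtE // /nx; ifs; lia. Qed.
Lemma nxtB2 a t e m y : y + 2 < a -> m + 1 <= t + e -> 4* m < y + 2*e + 1 ->
  nxt a t e ((t+1+m)*a+y) = (t+1+m)*a+(y+2).
Proof. move=> h h1 h2; rewrite nxtE; last lia. rewrite /nx; ifs; lia. Qed.
Lemma nxtB3 a t e m y : y + 1 = a -> m + 1 <= t + e -> 4* m < y + 2*e + 1 ->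
  nxt a t e ((t+1+m)*a+y) = (t+1+m+1)*a+0.
Proof. move=> h h1 h2; rewrite nxtE; last lia. rewrite /nx; ifs; lia. Qed.
Lemma nxtT a t e i y : y < a -> 2*t+e < i -> nxt a t e (i*a+y) = i*a+y+1.
Proof. move=> h h1; rewrite nxtE // /nx; ifs; lia. Qed.

Lemma rankA a t e i y : y < a -> i <= t -> rank a t e (i*a+y) = i*i + y %/ 2.
Proof. move=> h h1; rewrite rankE // /rk; ifs; lia. Qed.
Lemma rankB a t e m y : y < a -> m + 1 <= t + e -> y + 2*e <= 4* m ->
  rank a t e ((t+1+m)*a+y) = RB t e m + y.
Proof. move=> h h1 h2; rewrite rankE // /rk; ifs; try lia. by rewrite (_ : t+1+m-t-1 = m) //; lia. Qed.
Lemma rankC a t e m y : y < a -> m + 1 <= t + e -> 4* m < y + 2*e ->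
  rank a t e ((t+1+m)*a+y) = RC t e m + y %/ 2.
Proof. move=> h h1 h2; rewrite rankE // /rk; ifs; try lia. by rewrite (_ : t+1+m-t-1 = m) //; lia. Qed.
Lemma rankT a t e p y : y < a ->
  rank a t e ((2*t+e+1+p)*a+y) = RB t e (t+e) + (p*a + y).
Proof. move=> h; rewrite rankE // /rk; ifs; try lia. Qed.

Lemma sq_ge m : m <= m * m.
Proof. by case: m => // m; rewrite mulSn leq_addr. Qed.

Lemma memT a t e s i y : HY a t e s -> 2*t+e < i -> y < a -> Mem a i y.
Proof. case=> [ht [ha [he h1]]] h1' hy; rewrite /Mem; lia. Qed.

Lemma nxt_spec a t e s x : HY a t e s -> hb a x ->
  hb a (nxt a t e x) /\ x < nxt a t e x /\ (forall w, x < w < nxt a t e x -> ~ hb a w).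
Proof.
move=> H; case: (H) => [ht [ha [he h1]]] hx. have a0 : 0 < a by lia.
case: (decomp a x a0) => i [y [hy ?]]; subst x.
move: hx; rewrite hbE // /Mem => hx.
case: (leqP i t) => hit.
  case: (leqP (y+2) (4*i)) => h2.
    rewrite nxtA1 // hbE; last lia. split; first (rewrite /Mem; lia). split; first lia.
    move=> w hw; have -> : w = i*a + (y+1) by lia. rewrite hbE /Mem; lia.
  rewrite nxtA2 // hbE //. split; first (rewrite /Mem; lia). split; first lia.
  move=> w hw; have -> : w = i*a + (w - i*a) by lia. rewrite hbE /Mem; lia.
case: (leqP i (2*t+e)) => hi2.
  have [m ?] : exists m, i = t+1+m by exists (i-t-1); lia. subst i.
  case: (leqP (y + 2*e + 1) (4 * m)) => h3.
    rewrite nxtB1 //; try lia. rewrite hbE; last lia.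
    split; first (rewrite /Mem; lia). split; first lia. move=> w hw; lia.
  case: (ltnP (y+2) a) => h4.
    rewrite nxtB2 //; try lia. rewrite hbE //. split; first (rewrite /Mem; lia). split; first lia.
    move=> w hw; have -> : w = (t+1+m)*a + (y+1) by lia. rewrite hbE /Mem; lia.
  rewrite nxtB3; try lia. rewrite hbE //. split; first (rewrite /Mem; lia). split; first lia.
  move=> w hw; lia.
rewrite nxtT //. case: (ltnP (y+1) a) => h5.
  rewrite -addnA hbE //. split; first exact: (memT _ _ _ _ _ _ H).
  split; first lia. move=> w hw; lia.
have -> : i*a+y+1 = (i+1)*a + 0 by lia. rewrite hbE //.
split; first (apply: (memT _ _ _ _ _ _ H); lia). split; first lia. move=> w hw; lia.
Qed.

Lemma rank_nxt a t e s x : HY a t e s -> hb a x -> rank a t e (nxt a t e x) = (rank a t e x).+1.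
Proof.
move=> H; case: (H) => [_ [ha [he h1]]] hx. have a0 : 0 < a by lia.
case: (decomp a x a0) => i [y [hy ?]]; subst x.
move: hx; rewrite hbE // /Mem => hx.
case: (leqP i t) => hit.
  case: (leqP (y+2) (4*i)) => h2.
    rewrite nxtA1 // !rankA //; lia.
  rewrite nxtA2 // (rankA _ _ _ i y) //; case: (leqP (i+1) t) => h6.
    rewrite rankA //; lia.
  have ? : i = t by lia. subst i. have -> : t+1 = t+1+0 by lia. case: he => ?; subst e.
    rewrite rankB //; try lia. rewrite /RB; lia.
  rewrite rankC //; try lia. rewrite /RC; lia.
case: (leqP i (2*t+e)) => hi2; last first.
  have [p ?] : exists p, i = 2*t+e+1+p by exists (i-(2*t+e+1)); lia.
  subst i. rewrite nxtT //; case: (ltnP (y+1) a) => h5.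
    rewrite -addnA !rankT //; lia.
  have -> : (2*t+e+1+p)*a+y+1 = (2*t+e+1+(p+1))*a + 0 by lia.
  rewrite !rankT //; lia.
have [m ?] : exists m, i = t+1+m by exists (i-t-1); lia.
subst i.
case: (leqP (y + 2*e + 1) (4 * m)) => h3.
  rewrite nxtB1 //; try lia. rewrite !rankB //; lia.
case: (ltnP (y+2) a) => h4.
  rewrite nxtB2 //; try lia. rewrite (rankC _ _ _ _ (y+2)); try lia.
  case: (leqP (y+2*e) (4 * m)) => h7.
    rewrite rankB //; have := sq_ge m; have := sq_ge (m+1); have := sq_ge t; rewrite /RB /RC; case: he => ?; subst e; lia.
  rewrite rankC //; lia.
rewrite nxtB3; try lia. rewrite rankC //; try lia.
case: (leqP (m+2) (t+e)) => h8.
  have -> : t+1+m+1 = t+1+(m+1) by lia. rewrite rankB //; try lia.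
  have := sq_ge m; have := sq_ge (m+1); have := sq_ge t; rewrite /RB /RC; case: he => ?; subst e; lia.
case: he => ?; subst e.
  have ? : t = m+1 by lia. subst t.
  have -> : m+1+1+m+1 = 2*(m+1)+0+1+0 by lia. rewrite rankT //. have := sq_ge m; have := sq_ge (m+1); have := sq_ge (m+1+0); rewrite /RB /RC; lia.
have ? : m = t by lia. subst m.
have -> : t+1+t+1 = 2*t+1+1+0 by lia. rewrite rankT //. have := sq_ge t; have := sq_ge (t+1); rewrite /RB /RC; lia.
Qed.

Ltac dec3 X := let q := fresh "q" in let r := fresh "r" in let hr := fresh "hr" in
  let hX := fresh "hX" in
  (have [q [r [hr hX]]] : exists q r, r < 3 /\ X = 3*q + r by
    (exists (X %/ 3), (X %% 3); lia));
  case: r hr hX => [|[|[|r]]] hr hX; subst X; try lia.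

Lemma block a t e s p : HY a t e s -> hb a p -> rank a t e p %% 3 = 1 ->
  exists d1 d2, nxt a t e p = p + d1 /\ nxt a t e (p + d1) = p + d1 + d2 /\
    d1 %% 3 = d2 %% 3 /\ d1 %% 3 <> 0.
Proof.
move=> H; case: (H) => [ht [ha [he h1]]] hx hr. have a0 : 0 < a by lia.
case: (decomp a p a0) => i [y [hy ?]]; subst p.
move: hx; rewrite hbE // /Mem => hx.
case: (leqP i t) => hit.
  rewrite (rankA _ _ _ i y) // in hr.
  case: (leqP (y+4) (4*i)) => h2.
    exists 2, 2. rewrite (nxtA1 _ _ _ i y) //; last lia.
    rewrite (_ : i*a+y+2 = i*a+(y+2)); last lia.
    rewrite (nxtA1 _ _ _ i (y+2)); lia.
  case: (eqVneq y (4*i)) => h3.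
    exfalso. subst y. subst t. dec3 i.
  exists 2, (a - y - 2). rewrite (nxtA1 _ _ _ i y) //; try lia.
  rewrite (_ : i*a+y+2 = i*a+(y+2)); last lia.
  rewrite (nxtA2 _ _ _ i (y+2)); try lia.
  split; first lia. split; first lia.
  subst t. dec3 i.
case: (leqP i (2*t+e)) => hi2; last first.
  exists 1, 1. rewrite nxtT //. case: (ltnP (y+1) a) => h5.
    rewrite (_ : i*a+y+1 = i*a+(y+1)); last lia. rewrite nxtT //; lia.
  rewrite (_ : i*a+y+1 = (i+1)*a+0); last lia. rewrite nxtT //; lia.
have [m ?] : exists m, i = t+1+m by exists (i-t-1); lia.
subst i.
have hmm := sq_ge m.
case: (leqP (y + 2*e) (4* m)) => hB.
  rewrite rankB in hr; try lia.
  case: (leqP (y+2*e+2) (4* m)) => ha1.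
    exists 1, 1. rewrite nxtB1; try lia.
    rewrite (_ : (t+1+m)*a+y+1 = (t+1+m)*a+(y+1)); last lia.
    rewrite nxtB1; lia.
  case: (eqVneq (y+2*e+1) (4* m)) => hb1.
    exfalso. rewrite /RB in hr. subst t. case: he => ?; subst e; dec3 m.
  exists 2, 2. rewrite nxtB2; try lia.
  rewrite (_ : (t+1+m)*a+y+2 = (t+1+m)*a+(y+2)); last lia.
  rewrite nxtB2; lia.
rewrite rankC in hr; try lia.
case: (ltnP (y+4) a) => hc.
  exists 2, 2. rewrite nxtB2; try lia.
  rewrite (_ : (t+1+m)*a+y+2 = (t+1+m)*a+(y+2)); last lia.
  rewrite nxtB2; lia.
case: (eqVneq (y+3) a) => hc2.
  exfalso. rewrite /RC in hr. subst t. case: he => ?; subst e; dec3 m.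
exists 1, 1. rewrite nxtB3; try lia.
rewrite (_ : (t+1+m)*a+y+1 = (t+1+m+1)*a+0); last lia.
case: (leqP (m+2) (t+e)) => h8.
  rewrite (_ : t+1+m+1 = t+1+(m+1)); last lia. rewrite nxtB1; lia.
rewrite nxtT; lia.
Qed.

Definition gg a t e n := iter n (nxt a t e) 0.

Lemma ggS a t e n : gg a t e n.+1 = nxt a t e (gg a t e n).
Proof. by []. Qed.

Lemma hb0 a : 0 < a -> hb a 0.
Proof. move=> a0; rewrite (_ : 0 = 0*a+0) // hbE // /Mem; lia. Qed.

Lemma gg_hb a t e s n : HY a t e s -> hb a (gg a t e n).
Proof.
move=> H; elim: n => [|n IH] /=; first by apply: hb0; case: H => [_ [ha _]]; lia.
by case: (nxt_spec _ _ _ _ _ H IH).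
Qed.

Lemma gg_lt a t e s n : HY a t e s -> gg a t e n < gg a t e n.+1.
Proof. move=> H; by case: (nxt_spec _ _ _ _ _ H (gg_hb _ _ _ _ n H)) => _ []. Qed.

Lemma gg_rank a t e s n : HY a t e s -> rank a t e (gg a t e n) = n.
Proof.
move=> H; elim: n => [|n IH] /=.
  have a0 : 0 < a by case: H => [_ [ha _]]; lia.
  rewrite (_ : 0 = 0*a+0) // rankA //; lia.
by rewrite (rank_nxt _ _ _ _ _ H (gg_hb _ _ _ _ n H)) IH.
Qed.

Lemma gg_mono a t e s m n : HY a t e s -> m <= n -> gg a t e m <= gg a t e n.
Proof.
move=> H; elim: n => [|n IH]; first by rewrite leqn0 => /eqP ->.
rewrite leq_eqVlt => /orP [/eqP -> //|h].
apply: leq_trans (IH h) (ltnW (gg_lt _ _ _ _ n H)).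
Qed.

Lemma gg_all a t e s x : HY a t e s -> hb a x -> exists j, gg a t e j = x.
Proof.
move=> H hx.
have: exists j, gg a t e j <= x < gg a t e j.+1.
  elim: x {hx} => [|x [j hj]].
    exists 0; rewrite /=; have := gg_lt _ _ _ _ 0 H; rewrite /=; lia.
  case: (ltnP x.+1 (gg a t e j.+1)) => h.
    exists j; lia.
  exists j.+1; have := gg_lt _ _ _ _ j.+1 H; lia.
case=> j hj; exists j.
case: (nxt_spec _ _ _ _ _ H (gg_hb _ _ _ _ j H)) => _ [_ hb].
case: (ltnP (gg a t e j) x) => h; last lia.
exfalso; apply: (hb x) => //. apply/andP; split; first exact: h. by case/andP: hj.
Qed.

Lemma gen_add (S : natset) x y : gen S x -> gen S y -> gen S (x + y).
Proof. elim=> [|s x' hs _ IH] hy //; rewrite -addnA; exact: genS hs (IH hy). Qed.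

Lemma gen_ext (P Q : natset) x : (forall s, P s <-> Q s) -> gen P x -> gen Q x.
Proof. move=> hPQ; elim=> [|s x' hs _ IH]; [exact: gen0| apply: genS => //; exact/hPQ]. Qed.

Lemma gen_char a x : gen (fun s => s = a \/ s = a+2 \/ s = a+4) x <->
  exists i j, j <= 2*i /\ x = i*a + 2*j.
Proof.
split.
  elim=> [|s x' hs _ [i [j [hj ->]]]]; first by exists 0, 0.
  case: hs => [->|[->|->]]; [exists i.+1, j | exists i.+1, j.+1 | exists i.+1, j.+2]; lia.
case=> i [j [hj ->]]; elim: i j hj => [|i IH] j hj.
  have -> : j = 0 by lia. exact: gen0.
have -> : i.+1 * a + 2 * j = (a + 2 * minn j 2) + (i*a + 2*(j - minn j 2)) by lia.
apply: genS; first lia.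
apply: IH; lia.
Qed.

Lemma gen_hb a t e s x : HY a t e s ->
  (exists i j, j <= 2*i /\ x = i*a + 2*j) <-> hb a x.
Proof.
move=> H; case: (H) => [ht [ha [he h1]]]. have a0 : 0 < a by lia.
split.
  case=> i [j [hj ->]].
  have E := divn_eq (2*j) a. have hr := ltn_pmod (2*j) a0.
  move: E hr; move: (2*j %/ a) (2*j %% a) => c r E hr.
  rewrite (_ : i*a + 2*j = (i + c)*a + r); last lia.
  rewrite hbE //.
  case: c E => [|[|c]] E.
  - rewrite /Mem; lia.
  - rewrite /Mem; lia.
  - apply: (memT _ _ _ _ _ _ H) => //; lia.
rewrite /hb => hx.
have E := divn_eq x a. have hr := ltn_pmod x a0.
move: hx E hr; move: (x %/ a) (x %% a) => i y hx E hr.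
case: hx => [[h1' h2]|[h1' h2]].
  exists i, (y %/ 2); lia.
case: i h2 E => [|i] h2 E; first lia.
exists i, ((a + y) %/ 2); lia.
Qed.

Definition A4' (a i : nat) : natset := iv2 (i * a)%:Z (i * a + 4 * i)%:Z.
Definition B4' (a t e i : nat) : natset :=
  iv (i * a)%:Z ((i * a)%:Z + 2 * (2 * (i%:Z - t%:Z - 1) - e%:Z))%R.
Definition C4' (a t e i : nat) : natset :=
  iv2 ((i * a)%:Z + 2 * (2 * (i%:Z - t%:Z - 1) - e%:Z + 1))%R
      ((i * a)%:Z + 2 * (2 * t + e)%:Z)%R.
Definition H4' (a t e : nat) : natset := fun x =>
  x = 0
  \/ (exists i, 1 <= i <= t /\ A4' a i x)
  \/ (exists i, t + 1 <= i <= 2 * t + e /\ (B4' a t e i x \/ C4' a t e i x))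
  \/ from ((2 * t + e + 1) * a) x.

Lemma H4_conv k x : H4 k x <-> H4' (a4 k) (t4 k) (eps4 k) x.
Proof. by []. Qed.

Lemma H4_hb a t e s x : HY a t e s -> H4' a t e x <-> hb a x.
Proof.
move=> H; case: (H) => [ht [ha [he h1]]]. have a0 : 0 < a by lia.
split.
  case=> [->|[[i [hi hA]]|[[i [hi hBC]]|hF]]].
  - exact: hb0.
  - move: hA; rewrite /A4' /iv2 => hA.
    rewrite (_ : x = i*a + (x - i*a)); last lia.
    rewrite hbE; last lia. rewrite /Mem; lia.
  - move: hBC; rewrite /B4' /C4' /iv /iv2 => hBC.
    rewrite (_ : x = i*a + (x - i*a)); last lia.
    rewrite hbE; last lia. rewrite /Mem; lia.
  - move: hF; rewrite /from => hF.
    case: (decomp a x a0) => i [y [hy E]]. rewrite E hbE //.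
    apply: (memT _ _ _ _ _ _ H) => //.
    case: (leqP i (2*t+e)) => // hi.
    have : (i+1)*a <= (2*t+e+1)*a by apply: leq_mul; lia.
    lia.
case: (decomp a x a0) => i [y [hy E]]. rewrite E hbE // /Mem => hx.
case: (leqP i t) => hi.
  case: i hi hx E => [|i] hi hx E.
    left; lia.
  right; left; exists i.+1; split; first lia.
  rewrite /A4' /iv2; lia.
case: (leqP i (2*t+e)) => hi2.
  right; right; left; exists i; split; first lia.
  case: (leqP (y + 2*e) (4*(i-t-1))) => h3.
    left; rewrite /B4' /iv; lia.
  right; rewrite /C4' /iv2; lia.
right; right; right; rewrite /from.
have : (2*t+e+1)*a <= i*a by apply: leq_mul; lia.
lia.
Qed.

Lemma part2 a t e s : HY a t e s ->
 (forall i, 1 <= i <= t - 1 -> set_lt (A4' a i) (A4' a i.+1)) /\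
 (e = 0 -> set_lt (A4' a t) (B4' a t e (t + 1)) /\
           set_lt (B4' a t e (t + 1)) (C4' a t e (t + 1))) /\
 (e = 1 -> (forall x, ~ B4' a t e (t + 1) x) /\ set_lt (A4' a t) (C4' a t e (t + 1))) /\
 (forall i, t + 2 <= i <= 2 * t + e -> set_lt (B4' a t e i) (C4' a t e i)) /\
 (forall i, t + 1 <= i <= 2 * t + e - 1 -> set_lt (C4' a t e i) (B4' a t e i.+1)) /\
 set_lt (C4' a t e (2 * t + e)) (from ((2 * t + e + 1) * a)).
Proof.
move=> H; case: (H) => [ht [ha [he h1]]]. have a0 : 0 < a by lia.
rewrite /set_lt /A4' /B4' /C4' /iv /iv2 /from.
split.
  move=> i hi; split; first (exists (i*a); lia). split; first (exists (i.+1*a); lia).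
  move=> x y; lia.
split.
  move=> he0; subst e. split.
    split; first (exists (t*a); lia). split; first (exists ((t+1)*a); lia).
    move=> x y; lia.
  split; first (exists ((t+1)*a); lia). split; first (exists ((t+1)*a + 2); lia).
  move=> x y; lia.
split.
  move=> he1; subst e. split; first (move=> x; lia).
  split; first (exists (t*a); lia). split; first (exists ((t+1)*a); lia).
  move=> x y; lia.
split.
  move=> i hi. split; first (exists (i*a); lia).
  split; first (exists (i*a + (4*(i-t-1) + 2 - 2*e)); lia).
  move=> x y; lia.
split.
  move=> i hi. split; first (exists (i*a + (4*(i-t-1) + 2 - 2*e)); lia).
  split; first (exists (i.+1*a); lia).
  move=> x y; lia.
split; first (exists ((2*t+e)*a + (4*(2*t+e-t-1) + 2 - 2*e)); lia).
split; first (exists ((2*t+e+1)*a); lia).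
move=> x y; lia.
Qed.

Theorem lemma4p4 (k : nat) (hk : 0 < k) :
  (* (1) *)
  (is_submonoid (H4 k) /\ (forall s, S4 k s -> H4 k s)) /\
  (* (2) *)
  ((forall i, 1 <= i <= t4 k - 1 -> set_lt (A4 k i) (A4 k i.+1)) /\
   (~~ odd k -> set_lt (A4 k (t4 k)) (B4 k (t4 k + 1)) /\
                set_lt (B4 k (t4 k + 1)) (C4 k (t4 k + 1))) /\
   (odd k -> (forall x, ~ B4 k (t4 k + 1) x) /\
             set_lt (A4 k (t4 k)) (C4 k (t4 k + 1))) /\
   (forall i, t4 k + 2 <= i <= 2 * t4 k + eps4 k -> set_lt (B4 k i) (C4 k i)) /\
   (forall i, t4 k + 1 <= i <= 2 * t4 k + eps4 k - 1 ->
      set_lt (C4 k i) (B4 k i.+1)) /\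
   set_lt (C4 k (2 * t4 k + eps4 k)) (from ((2 * t4 k + eps4 k + 1) * a4 k))) /\
  (* (3) *)
  (forall x, gen (S4 k) x <-> H4 k x) /\
  (* (4) *)
  perm_ns 3 (H4 k).
Proof.
have HY0 : HY (a4 k) (t4 k) (eps4 k) (k %/ 2).
  have : eps4 k = k %% 2 by rewrite /eps4 modn2.
  rewrite /HY /a4 /t4; lia.
set a := a4 k. set t := t4 k. set e := eps4 k.
have HH : forall x, H4 k x <-> hb a x.
  by move=> x; rewrite H4_conv; exact: (H4_hb _ _ _ _ x HY0).
have HG : forall x, gen (S4 k) x <-> H4 k x.
  move=> x; rewrite HH -(gen_hb _ _ _ _ x HY0) -gen_char; done.
have HM : is_submonoid (H4 k).
  split; first by left.
  move=> x y /HG hx /HG hy; apply/HG; exact: gen_add.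
have HS : forall s, S4 k s -> H4 k s.
  move=> s hs; apply/HG; rewrite -[s]addn0; apply: genS => //; exact: gen0.
have He : e = 0 \/ e = 1 by case: HY0 => [_ [_ [he _]]].
split; first by [].
split.
  case: (part2 _ _ _ _ HY0) => p1 [p2 [p3 [p4 [p5 p6]]]].
  split; first exact: p1.
  split. move=> hodd; apply: p2; rewrite /e /eps4; by move/negbTE: hodd => ->.
  split. move=> hodd; apply: p3; rewrite /e /eps4 hodd.  done.
  split; first exact: p4. split; first exact: p5. exact: p6.
split; first exact: HG.
split.
  split; first exact: HM.
  exists ((2*t+e+1)*a) => x hx; right; right; right; exact: hx.
have a0 : 0 < a by case: HY0 => [_ [ha _]]; lia.
exists (gg a t e). split.
  split; first by move=> j; exact: (gg_lt _ _ _ _ j HY0).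
  move=> x; rewrite HH; split; first exact: (gg_all _ _ _ _ x HY0).
  by case=> j <-; exact: (gg_hb _ _ _ _ j HY0).
have g1 : gg a t e 1 = a.
  rewrite /gg /= (_ : 0 = 0*a+0) // nxtA2 //; lia.
have ht1 : 1 <= t by case: HY0 => [_ [_ [_ ?]]].
have ha' : a = 4*t+2*e+1 by case: HY0 => [_ [? _]].
have g2 : gg a t e 2 = a + 2.
  rewrite /gg iterS -/(gg a t e 1) g1.
  have E := nxtA1 a t e 1 0. rewrite mul1n addn0 add0n in E.
  by rewrite E.
have g3 : gg a t e 3 = a + 4.
  rewrite /gg iterS -/(gg a t e 2) g2.
  have E := nxtA1 a t e 1 2. rewrite mul1n in E.
  by rewrite E //; lia.
split.
  move=> x; rewrite -HG; split; apply: gen_ext => s; rewrite /S4; split.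
  - case=> [->|[->|->]]; [exists 1 | exists 2 | exists 3] => //.
  - by case=> j /andP [hj1 hj2] ->; case: j hj1 hj2 => [|[|[|[|j]]]] //= _ _;
       [left | right; left | right; right].
  - by case=> j /andP [hj1 hj2] ->; case: j hj1 hj2 => [|[|[|[|j]]]] //= _ _;
       [left | right; left | right; right].
  - case=> [->|[->|->]]; [exists 1 | exists 2 | exists 3] => //.
move=> m r hr.
have hp := gg_rank _ _ _ _ (m*3+1) HY0.
have hb1 := gg_hb _ _ _ _ (m*3+1) HY0.
have : rank a t e (gg a t e (m*3+1)) %% 3 = 1 by rewrite hp; lia.
case/(block _ _ _ _ _ HY0 hb1) => d1 [d2 [E1 [E2 [E3 E4]]]].
have G2 : gg a t e (m*3+2) = gg a t e (m*3+1) + d1.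
  by rewrite (_ : m*3+2 = (m*3+1).+1) ?ggS ?E1 //; lia.
have G3 : gg a t e (m*3+3) = gg a t e (m*3+1) + d1 + d2.
  by rewrite (_ : m*3+3 = (m*3+2).+1) ?ggS ?G2 ?E2 //; lia.
rewrite /= G2 G3.
move: (gg a t e (m*3+1)) => p.
do 3 (case: eqP => ?); simpl; lia.
Qed.
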